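(* Let $2\le m\le n$. Then for every subgroup $H$ of $\mathrm{Sp}(n,1)$ which is conjugate in $\mathrm{Sp}(n,1)$ to $I_{n-m}\oplus\mathrm{SU}(m,1)$, the set of traces of the elements of $H$ is not contained in $\mathbb R$.
   Context: $\mathbb H$ denotes the quaternions. $\mathrm{Sp}(n,1)=\{A\in\mathrm{GL}(n+1,\mathbb H): A^*I_{n,1}A=I_{n,1}\}$ with $A^*$ the conjugate transpose and $I_{n,1}=\mathrm{diag}(1,\dots,1,-1)$. $\mathrm{SU}(m,1)$ is the group of complex $(m+1)\times(m+1)$ matrices of determinant $1$ preserving $I_{m,1}$. $I_{n-m}\oplus\mathrm{SU}(m,1)$ is the subgroup of block diagonal matrices with the $(n-m)\times(n-m)$ identity in the upper left block and an element of $\mathrm{SU}(m,1)$ in the lower right block. The trace of a quaternionic matrix is the sum of its diagonal entries. *)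

(* Defs.v *)
From HB Require Import structures.
From mathcomp Require Import all_boot all_order all_algebra.
From mathcomp Require Import complex.
From mathcomp Require Import reals.
From mathcomp Require Import ring.
Set Implicit Arguments. Unset Strict Implicit. Unset Printing Implicit Defensive.
Import Order.TTheory GRing.Theory Num.Theory.
Local Open Scope ring_scope.

Section Quaternions.
Variable R : comNzRingType.

(* q = q0 + q1 i + q2 j + q3 k *)
Record quat := Quat { q0 : R; q1 : R; q2 : R; q3 : R }.

Definition quat_to (q : quat) := (q0 q, q1 q, q2 q, q3 q).
Definition quat_of (x : R * R * R * R) := let: (a, b, c, d) := x in Quat a b c d.
Lemma quat_toK : cancel quat_to quat_of. Proof. by case. Qed.

HB.instance Definition _ := Equality.copy quat (can_type quat_toK).
HB.instance Definition _ := Choice.copy quat (can_type quat_toK).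

Definition qzero := Quat 0 0 0 0.
Definition qone := Quat 1 0 0 0.
Definition qadd (x y : quat) :=
  Quat (q0 x + q0 y) (q1 x + q1 y) (q2 x + q2 y) (q3 x + q3 y).
Definition qopp (x : quat) := Quat (- q0 x) (- q1 x) (- q2 x) (- q3 x).
(* Hamilton product: i^2 = j^2 = k^2 = ijk = -1 *)
Definition qmul (x y : quat) :=
  Quat (q0 x * q0 y - q1 x * q1 y - q2 x * q2 y - q3 x * q3 y)
       (q0 x * q1 y + q1 x * q0 y + q2 x * q3 y - q3 x * q2 y)
       (q0 x * q2 y - q1 x * q3 y + q2 x * q0 y + q3 x * q1 y)
       (q0 x * q3 y + q1 x * q2 y - q2 x * q1 y + q3 x * q0 y).

Lemma qaddA : associative qadd.
Proof. by case=> ? ? ? ? [] ? ? ? ? [] ? ? ? ?; rewrite /qadd /qzero /=; congr Quat; ring. Qed.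
Lemma qaddC : commutative qadd.
Proof. by case=> ? ? ? ? [] ? ? ? ?; rewrite /qadd /qzero /=; congr Quat; ring. Qed.
Lemma qadd0 : left_id qzero qadd.
Proof. by case=> ? ? ? ?; rewrite /qadd /qzero /=; congr Quat; ring. Qed.
Lemma qaddN : left_inverse qzero qopp qadd.
Proof. by case=> ? ? ? ?; rewrite /qadd /qzero /=; congr Quat; ring. Qed.

HB.instance Definition _ := GRing.isZmodule.Build quat qaddA qaddC qadd0 qaddN.

Lemma qmulA : associative qmul.
Proof. by case=> ? ? ? ? [] ? ? ? ? [] ? ? ? ?; rewrite /qmul /qone /=; congr Quat; ring. Qed.
Lemma qmul1 : left_id qone qmul.
Proof. by case=> ? ? ? ?; rewrite /qmul /qone /=; congr Quat; ring. Qed.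
Lemma qmulr1 : right_id qone qmul.
Proof. by case=> ? ? ? ?; rewrite /qmul /qone /=; congr Quat; ring. Qed.
Lemma qmulDl : left_distributive qmul qadd.
Proof. by case=> ? ? ? ? [] ? ? ? ? [] ? ? ? ?; rewrite /qmul /qadd /=; congr Quat; ring. Qed.
Lemma qmulDr : right_distributive qmul qadd.
Proof. by case=> ? ? ? ? [] ? ? ? ? [] ? ? ? ?; rewrite /qmul /qadd /=; congr Quat; ring. Qed.
Lemma qone_neq0 : qone != qzero.
Proof. by apply/eqP => -[] /eqP; rewrite oner_eq0. Qed.

HB.instance Definition _ := GRing.Zmodule_isNzRing.Build quat
  qmulA qmul1 qmulr1 qmulDl qmulDr qone_neq0.

Definition qconj (x : quat) := Quat (q0 x) (- q1 x) (- q2 x) (- q3 x).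

Definition qreal (x : quat) : Prop := q1 x = 0 /\ q2 x = 0 /\ q3 x = 0.

End Quaternions.

Arguments Quat {R}.

Definition c2q (R : comNzRingType) (z : R[i]) : quat R :=
  let: Complex a b := z in Quat a b 0 0.

Definition Iform (T : pzRingType) (n : nat) : 'M[T]_(n.+1) :=
  \matrix_(i, j) if i == j then (if i == ord_max then -1 else 1) else 0.

Definition qadj (R : comNzRingType) (k : nat) (A : 'M[quat R]_k) : 'M[quat R]_k :=
  \matrix_(i, j) qconj (A j i).
Definition cadj (R : comNzRingType) (k : nat) (A : 'M[R[i]]_k) : 'M[R[i]]_k :=
  \matrix_(i, j) conjc (A j i).

Definition in_Sp (R : comNzRingType) (n : nat) (A : 'M[quat R]_(n.+1)) : Prop :=
  (exists B : 'M[quat R]_(n.+1), A *m B = 1%:M /\ B *m A = 1%:M)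
  /\ qadj A *m Iform (quat R) n *m A = Iform (quat R) n.

Definition in_SU (R : rcfType) (m : nat) (B : 'M[R[i]]_(m.+1)) : Prop :=
  \det B = 1 /\ cadj B *m Iform R[i] m *m B = Iform R[i] m.

Definition blockI (R : comNzRingType) (n m : nat) (B : 'M[R[i]]_(m.+1))
  : 'M[quat R]_(n.+1) :=
  \matrix_(i, j)
    if (i < n - m)%N then (if i == j then 1 else 0)
    else if (j < n - m)%N then 0
    else c2q (B (inord (i - (n - m))) (inord (j - (n - m)))).

(* Main.v *)
Require Import Defs.
From HB Require Import structures.
From mathcomp Require Import all_boot all_order all_algebra.
From mathcomp Require Import complex reals ring lra.
Set Implicit Arguments. Unset Strict Implicit. Unset Printing Implicit Defensive.
Import Order.TTheory GRing.Theory Num.Theory.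
Local Open Scope ring_scope.

Section SU.
Variable R : rcfType.
Variable m : nat.

Definition dfun (a b c : R[i]) (k : 'I_m.+1) : R[i] :=
  if val k == 0%N then a else if val k == 1%N then b
  else if val k == m then c else 1.

Definition dg a b c : 'M[R[i]]_(m.+1) := diag_mx (\row_k dfun a b c k).

Lemma Iform_diag : Iform R[i] m = diag_mx (\row_k (if k == ord_max then -1 else 1)).
Proof. by apply/matrixP => i j; rewrite !mxE eq_sym; case: eqP => // ->. Qed.

Lemma dg_SU (hm : (2 <= m)%N) a b c : a * b * c = 1 -> conjc a * a = 1 -> conjc b * b = 1 ->
  conjc c * c = 1 -> in_SU (dg a b c).
Proof.
move=> habc ha hb hc; split.
  rewrite det_diag.
  have i1 : (1 < m.+1)%N by apply: leq_trans hm _.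
  rewrite (bigD1 ord0) //= (bigD1 (Ordinal i1)) //= (bigD1 ord_max) //=; last first.
    by apply/andP; split; rewrite -val_eqE /=; apply/eqP => H; rewrite H in hm.
  rewrite big1 ?mulr1; last first.
    move=> k /andP [/andP [k0 k1] km]; rewrite mxE /dfun.
    move: k0 k1 km; rewrite -!val_eqE /= => /negbTE -> /negbTE -> /negbTE -> //.
  rewrite !mxE /dfun /=.
  have -> : (m == 0%N) = false by apply/eqP => H; rewrite H in hm.
  have -> : (m == 1%N) = false by apply/eqP => H; rewrite H in hm.
  by rewrite eqxx mulrA.
have cadj_diag : forall d : 'rV[R[i]]_(m.+1), cadj (diag_mx d) = diag_mx (\row_k conjc (d 0 k)).
  move=> d; apply/matrixP => i j; rewrite !mxE eq_sym.
  by case: eqP => [->|] //=; rewrite mulr0n /= oppr0.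
rewrite Iform_diag /dg cadj_diag !mulmx_diag; congr diag_mx; apply/rowP => k.
rewrite !mxE /dfun.
have key : forall x : R[i], conjc x * x = 1 -> forall e : R[i], conjc x * e * x = e.
  by move=> x hx e; rewrite mulrAC hx mul1r.
case: ifP => _; first exact: key.
case: ifP => _; first exact: key.
case: ifP => _; first exact: key.
by apply: key; rewrite conjc1 mulr1.
Qed.
End SU.
Section B.
Variable R : rcfType.

Lemma c2qD (x y : R[i]) : c2q (x + y) = c2q x + c2q y.
Proof. by case: x => ? ?; case: y => ? ? /=; congr Quat; rewrite /= addr0. Qed.
Lemma c2qN (x : R[i]) : c2q (- x) = - c2q x.
Proof. by case: x => ? ? /=; congr Quat; rewrite /= oppr0. Qed.
Lemma c2q0 : c2q (0 : R[i]) = 0.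
Proof. by []. Qed.
Lemma c2qB (x y : R[i]) : c2q (x - y) = c2q x - c2q y.
Proof. by rewrite c2qD c2qN. Qed.

Definition qi : quat R := Quat 0 1 0 0.

Lemma c2qMn (x : R[i]) k : c2q (x *+ k) = c2q x *+ k.
Proof. by elim: k => [|k IH]; rewrite ?mulr0n // !mulrS c2qD IH. Qed.

Lemma blockI_comb n m (B1 B2 B3 B4 : 'M[R[i]]_(m.+1)) (w : R[i]) :
  (m <= n)%N ->
  B1 - B2 - B3 + B4 = diag_mx (\row_k if val k == m then w else 0) ->
  blockI n B1 - blockI n B2 - blockI n B3 + blockI n B4 =
  \matrix_(i < n.+1, j < n.+1) (if (i == ord_max) && (j == ord_max) then c2q w else 0 : quat R).
Proof.
move=> hmn hB; apply/matrixP => i j; rewrite !mxE.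
have nmax : forall k : 'I_n.+1, (k < n - m)%N -> (k == ord_max) = false.
  move=> k hk; apply/negbTE; rewrite -val_eqE /=; apply/eqP => hk'.
  by move: hk; rewrite hk' ltnNge leq_subr.
case: ifP => hi.
  by rewrite nmax // subrr sub0r addNr.
case: ifP => hj.
  by rewrite (nmax j) ?andbF // subrr sub0r addNr.
rewrite -!c2qB -c2qD.
have -> : B1 (inord (i - (n - m))) (inord (j - (n - m))) -
  B2 (inord (i - (n - m))) (inord (j - (n - m))) -
  B3 (inord (i - (n - m))) (inord (j - (n - m))) +
  B4 (inord (i - (n - m))) (inord (j - (n - m))) =
  (B1 - B2 - B3 + B4) (inord (i - (n - m))) (inord (j - (n - m))) by rewrite !mxE.
rewrite hB !mxE.
have hi' : (i - (n - m) < m.+1)%N.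
  by rewrite ltn_subLR ?addnS ?subnK ?ltn_ord // leqNgt hi.
have hj' : (j - (n - m) < m.+1)%N.
  by rewrite ltn_subLR ?addnS ?subnK ?ltn_ord // leqNgt hj.
have eqij : (inord (i - (n - m)) == inord (j - (n - m)) :> 'I_m.+1) = (i == j).
  rewrite -val_eqE /= !inordK // -val_eqE /=.
  apply/eqP/eqP => [h|-> //].
  have hi2 : (n - m <= i)%N by rewrite leqNgt hi.
  have hj2 : (n - m <= j)%N by rewrite leqNgt hj.
  by rewrite -(subnK hi2) h subnK.
rewrite eqij /= inordK //.
case: (eqVneq i j) => [eij|nij]; last first.
  rewrite mulr0n c2q0; case: eqP => // hi3; case: eqP => // hj3.
  by case/eqP: nij; rewrite hi3 hj3.
rewrite -eij mulr1n andbb.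
have -> : ((i - (n - m))%N == m) = (i == ord_max).
  rewrite -val_eqE /=.
  have hi2 : (n - m <= i)%N by rewrite leqNgt hi.
  apply/eqP/eqP => [h|->]; last by rewrite subKn.
  by rewrite -(subnK hi2) h subnKC.
by case: ifP.
Qed.
Lemma comb4 m (hm : (2 <= m)%N) :
  let i := ('i%C : R[i]) in
  dg m (-1) i i - dg m (-1) (-i) (-i) - dg m 1 i (-i) + dg m 1 (-i) i =
  diag_mx (\row_k if val k == m then i *+ 4 else 0).
Proof.
move=> i; apply/matrixP => a b; rewrite !mxE /dfun.
case: (a == b); rewrite ?mulr1n ?mulr0n; last by rewrite subrr sub0r addNr.
case: ifP => [/eqP a0|_].
  have -> : (val a == m) = false by rewrite a0; apply/eqP => H; rewrite -H in hm.
  ring.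
case: ifP => [/eqP a1|_].
  have -> : (val a == m) = false by rewrite a1; apply/eqP => H; rewrite -H in hm.
  ring.
case: ifP => _; ring.
Qed.
End B.
Section C.
Variable R : rcfType.
Let ii : R[i] := 'i%C.
Lemma conj_i : conjc ii = - ii.
Proof. by apply/eqP; rewrite eq_complex /= oppr0 !eqxx. Qed.
Lemma ii2 : ii * ii = -1.
Proof. by rewrite -expr2 sqr_i. Qed.
Lemma cn1 : conjc (-1 : R[i]) * -1 = 1.
Proof. by rewrite rmorphN rmorph1 mulrNN mulr1. Qed.
Lemma cpi : conjc ii * ii = 1.
Proof. by rewrite conj_i mulNr ii2 opprK. Qed.
Lemma cni : conjc (- ii) * - ii = 1.
Proof. by rewrite rmorphN mulrNN cpi. Qed.
Lemma c1 : conjc (1 : R[i]) * 1 = 1.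
Proof. by rewrite rmorph1 mulr1. Qed.

Lemma SU4 m (hm : (2 <= m)%N) :
  [/\ in_SU (dg m (-1) ii ii), in_SU (dg m (-1) (-ii) (-ii)),
      in_SU (dg m 1 ii (-ii)) & in_SU (dg m 1 (-ii) ii)].
Proof.
split; apply: dg_SU => //; rewrite ?cn1 ?cpi ?cni ?c1 //;
  by rewrite ?mulN1r ?mul1r ?mulNr ?mulrN ?opprK ii2 ?opprK.
Qed.
End C.

Section Q.
Variable R : rcfType.
Lemma qmulE (x y : quat R) : x * y = qmul x y. Proof. by []. Qed.
Lemma qaddE (x y : quat R) : x + y = qadd x y. Proof. by []. Qed.
Lemma qoppE (x : quat R) : - x = qopp x. Proof. by []. Qed.
Lemma qoneE : (1 : quat R) = Quat 1 0 0 0. Proof. by []. Qed.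
Lemma qzeroE : (0 : quat R) = Quat 0 0 0 0. Proof. by []. Qed.

Definition qI : quat R := Quat 0 1 0 0.
Definition Nq (x : quat R) := q0 x ^+ 2 + q1 x ^+ 2 + q2 x ^+ 2 + q3 x ^+ 2.
Definition Vq (x : quat R) := x * qI * qconj x.

Lemma Nq_ge0 x : 0 <= Nq x.
Proof. by rewrite /Nq !addr_ge0 ?sqr_ge0. Qed.

Lemma lin1 (p v : quat R) : q1 (qconj p * v * p) =
  q0 v * q1 (qconj p * Quat 1 0 0 0 * p) + q1 v * q1 (qconj p * Quat 0 1 0 0 * p)
  + q2 v * q1 (qconj p * Quat 0 0 1 0 * p) + q3 v * q1 (qconj p * Quat 0 0 0 1 * p).
Proof. case: p => ? ? ? ?; case: v => ? ? ? ?; rewrite !qmulE /=; ring. Qed.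

Lemma Vq0 x : q0 (Vq x) = 0.
Proof. case: x => ? ? ? ?; rewrite /Vq !qmulE /=; ring. Qed.

Lemma Lmax p : q1 (qconj p * Vq p * p) = Nq p ^+ 2.
Proof. case: p => ? ? ? ?; rewrite /Vq /Nq !qmulE /=; ring. Qed.

Lemma Lle p a : q1 (qconj p * Vq a * p) <= Nq p * Nq a.
Proof.
have -> : Nq p * Nq a = q1 (qconj p * Vq a * p) +
   2 * (q2 (qconj p * a) ^+ 2 + q3 (qconj p * a) ^+ 2).
  by case: p => ? ? ? ?; case: a => ? ? ? ?; rewrite /Vq /Nq !qmulE /=; ring.
by rewrite lerDl mulr_ge0 ?addr_ge0 ?sqr_ge0.
Qed.

Lemma key n (a : 'I_n.+1 -> quat R) (e : 'I_n.+1 -> R) :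
  e ord_max = -1 -> (forall k, k != ord_max -> e k = 1) ->
  \sum_k e k * Nq (a k) = -1 ->
  \sum_k e k * q1 (Vq (a k)) = 0 ->
  \sum_k e k * q2 (Vq (a k)) = 0 ->
  \sum_k e k * q3 (Vq (a k)) = 0 -> False.
Proof.
move=> emax eo hN h1 h2 h3.
set p := a ord_max.
have hL : \sum_k e k * q1 (qconj p * Vq (a k) * p) = 0.
  under eq_bigr => k _ do rewrite lin1 Vq0 mul0r add0r !mulrDr !mulrA.
  rewrite !big_split /= -!mulr_suml h1 h2 h3; ring.
rewrite (bigD1 ord_max) // emax Lmax in hL.
rewrite (bigD1 ord_max) // emax in hN.
have hle : \sum_(k < n.+1 | k != ord_max) e k * q1 (qconj p * Vq (a k) * p)
    <= Nq p * \sum_(k < n.+1 | k != ord_max) e k * Nq (a k).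
  rewrite mulr_sumr; apply: ler_sum => k hk; rewrite eo // !mul1r; exact: Lle.
have hS : 0 <= \sum_(k < n.+1 | k != ord_max) e k * Nq (a k).
  by apply: sumr_ge0 => k hk; rewrite eo // mul1r Nq_ge0.
move: hL hN hle hS; rewrite -/p.
set A := \sum_(k < n.+1 | _) _.
set S := \sum_(k < n.+1 | _) _.
move: (Nq_ge0 p); set P := Nq p => hP hL hN hle hS.
have hL' : -1 * P ^+ 2 + A = 0 := hL.
have hN' : -1 * P + S = -1 := hN.
clear hL hN.
have hA : A = P ^+ 2 by lra.
have hP1 : P = S + 1 by lra.
rewrite hA hP1 in hle.
have : (S + 1) ^+ 2 - (S + 1) * S = S + 1 by ring.
lra.
Qed.
End Q.

Lemma Iform_diagT (T : pzRingType) n :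
  Iform T n = diag_mx (\row_k (if k == ord_max then -1 else 1)).
Proof. by apply/matrixP => i j; rewrite !mxE eq_sym; case: eqP => // ->. Qed.

Section M.
Variable R : rcfType.
Variable n : nat.
Notation Q := (quat R).
Definition epsq (k : 'I_n.+1) : Q := if k == ord_max then -1 else 1.
Notation I := (Iform Q n).

Lemma II : I *m I = 1%:M.
Proof.
rewrite Iform_diagT mulmx_diag; apply/matrixP => i j; rewrite !mxE.
by case: (i == ord_max); rewrite ?mulrNN mulr1.
Qed.

Lemma gi_eq (g gi : 'M[Q]_(n.+1)) : in_Sp g -> g *m gi = 1%:M ->
  gi = I *m qadj g *m I.
Proof.
move=> [_ hS] hg.
have hP : (I *m qadj g *m I) *m g = 1%:M by rewrite -!mulmxA (mulmxA (qadj g)) hS II.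
by rewrite -[gi]mul1mx -hP -(mulmxA _ g gi) hg mulmx1.
Qed.

Lemma gi_ent (g : 'M[Q]_(n.+1)) k :
  (I *m qadj g *m I) ord_max k = epsq ord_max * qconj (g k ord_max) * epsq k.
Proof. by rewrite Iform_diagT mul_mx_diag mxE mul_diag_mx !mxE. Qed.

Lemma norm_ent (g : 'M[Q]_(n.+1)) : in_Sp g ->
  \sum_k qconj (g k ord_max) * epsq k * g k ord_max = -1.
Proof.
move=> [_ hS].
have := congr1 (fun M : 'M_(n.+1) => M ord_max ord_max) hS.
have -> : I ord_max ord_max = -1 by rewrite mxE eqxx.
rewrite /= mxE => <-.
by apply: eq_bigr => k _; rewrite Iform_diagT mul_mx_diag !mxE.
Qed.

Lemma tr_ent (g gi : 'M[Q]_(n.+1)) (y : Q) :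
  \tr (g *m (\matrix_(i < n.+1, j < n.+1) (if (i == ord_max) && (j == ord_max) then y else 0 : Q)) *m gi)
  = \sum_k g k ord_max * y * gi ord_max k.
Proof.
rewrite /mxtrace; apply: eq_bigr => k _.
rewrite mxE (bigD1 ord_max) //= big1 ?addr0.
  congr (_ * _); rewrite mxE (bigD1 ord_max) //= big1 ?addr0 ?mxE ?eqxx //.
  by move=> l hl; rewrite mxE (negbTE hl) mulr0.
move=> l hl; rewrite mxE big1 ?mul0r // => j _; rewrite mxE (negbTE hl) andbF mulr0.
done.
Qed.
End M.

Section F.
Variable R : rcfType.
Notation Q := (quat R).

Lemma qreal_comb (x1 x2 x3 x4 : Q) : qreal x1 -> qreal x2 -> qreal x3 -> qreal x4 ->
  qreal (x1 - x2 - x3 + x4).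
Proof.
case: x1 => ? ? ? ? [/= -> [-> ->]]; case: x2 => ? ? ? ? [/= -> [-> ->]].
case: x3 => ? ? ? ? [/= -> [-> ->]]; case: x4 => ? ? ? ? [/= -> [-> ->]].
by rewrite /qreal /= !oppr0 !addr0.
Qed.

Lemma q4E (x : Q) : x *+ 4 = Quat (q0 x *+ 4) (q1 x *+ 4) (q2 x *+ 4) (q3 x *+ 4).
Proof. by case: x => ? ? ? ?; rewrite !mulrS !mulr0n. Qed.

Lemma qsum (c : Q -> R) (cD : forall x y, c (x + y) = c x + c y) (c0 : c 0 = 0)
  N (F : 'I_N -> Q) : c (\sum_k F k) = \sum_k c (F k).
Proof. exact: (big_morph c cD c0). Qed.

Lemma term0 (a : Q) (b : bool) :
  q0 (qconj a * (if b then -1 else 1) * a) = (if b then -1 else 1) * Nq a.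
Proof. by case: a => ? ? ? ?; case: b; rewrite !qmulE /Nq /=; ring. Qed.

Lemma termc (a : Q) (b : bool) :
  let t := a * (qI R *+ 4) * (-1 * qconj a * (if b then -1 else 1)) in
  [/\ q1 t = -4 * ((if b then -1 else 1) * q1 (Vq a)),
      q2 t = -4 * ((if b then -1 else 1) * q2 (Vq a)) &
      q3 t = -4 * ((if b then -1 else 1) * q3 (Vq a))].
Proof.
rewrite q4E; case: a => ? ? ? ?; case: b; rewrite /Vq !qmulE /=; split; ring.
Qed.
End F.

Theorem corollary4p13 (R : realType) (n m : nat) :
  (2 <= m)%N -> (m <= n)%N ->
  forall H : 'M[quat R]_(n.+1) -> Prop,
    (exists g gi : 'M[quat R]_(n.+1),
        in_Sp g /\ g *m gi = 1%:M /\ gi *m g = 1%:M /\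
        (forall A, H A <-> exists B : 'M[R[i]]_(m.+1),
                              in_SU B /\ A = g *m blockI n B *m gi)) ->
    ~ (forall A, H A -> qreal (\tr A)).
Proof.
move=> hm hmn H [g [gi [hSp [hggi [hgig hH]]]]] hreal.
have t : forall B : 'M[R[i]]_(m.+1), in_SU B -> qreal (\tr (g *m blockI n B *m gi)).
  by move=> B hB; apply: hreal; apply/hH; exists B.
have [s1 s2 s3 s4] := SU4 R hm.
set ii := ('i%C : R[i]).
have hY : qreal (\tr (g *m (blockI n (dg m (-1) ii ii) - blockI n (dg m (-1) (-ii) (-ii))
   - blockI n (dg m 1 ii (-ii)) + blockI n (dg m 1 (-ii) ii)) *m gi)).
  rewrite mulmxDr !mulmxBr mulmxDl !mulmxBl raddfD !raddfB /=.
  by apply: qreal_comb; apply: t.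
have hc4 := comb4 R hm.
rewrite (blockI_comb hmn hc4) tr_ent (gi_eq hSp hggi) in hY.
pose e (k : 'I_n.+1) : R := if k == ord_max then -1 else 1.
have hs : \sum_k g k ord_max * c2q (ii *+ 4) * (Iform (quat R) n *m qadj g *m Iform (quat R) n) ord_max k
  = \sum_k g k ord_max * (qI R *+ 4) * (-1 * qconj (g k ord_max) * (if k == ord_max then -1 else 1)).
  by apply: eq_bigr => k _; rewrite gi_ent c2qMn /epsq eqxx.
rewrite hs in hY; case: hY => h1 [h2 h3].
rewrite (qsum (c := @q1 R)) // in h1.
rewrite (qsum (c := @q2 R)) // in h2.
rewrite (qsum (c := @q3 R)) // in h3.
have m4 : (-4 : R) != 0 by rewrite oppr_eq0 pnatr_eq0.
apply: (@key R n (fun k => g k ord_max) e).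
- by rewrite /e eqxx.
- by move=> k /negbTE hk; rewrite /e hk.
- have := congr1 (@q0 R) (norm_ent hSp).
  rewrite (qsum (c := @q0 R)) // => hq.
  have -> : (-1 : R) = q0 (-1 : quat R) by [].
  rewrite -hq; by apply: eq_bigr => k _; rewrite /epsq term0.
- move: h1; rewrite (eq_bigr (fun k => -4 * (e k * q1 (Vq (g k ord_max))))); last first.
    by move=> k _; case: (termc (g k ord_max) (k == ord_max)).
  by rewrite -mulr_sumr => /eqP; rewrite mulf_eq0 (negbTE m4) => /eqP.
- move: h2; rewrite (eq_bigr (fun k => -4 * (e k * q2 (Vq (g k ord_max))))); last first.
    by move=> k _; case: (termc (g k ord_max) (k == ord_max)).
  by rewrite -mulr_sumr => /eqP; rewrite mulf_eq0 (negbTE m4) => /eqP.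
- move: h3; rewrite (eq_bigr (fun k => -4 * (e k * q3 (Vq (g k ord_max))))); last first.
    by move=> k _; case: (termc (g k ord_max) (k == ord_max)).
  by rewrite -mulr_sumr => /eqP; rewrite mulf_eq0 (negbTE m4) => /eqP.
Qed.
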